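(* Let $\alpha\in[0,1)$ and let $$X(\sqrt{t},\alpha)=\{\sqrt{n}\,e^{2\pi i n\alpha}\ :\ n\in\mathbb{N}\}\subset\mathbb{C}.$$ The following four statements are equivalent: (a) $X(\sqrt{t},\alpha)$ is relatively dense; (b) $X(\sqrt{t},\alpha)$ is uniformly discrete; (c) $X(\sqrt{t},\alpha)$ is a Delone set; (d) $\alpha$ is badly approximable.
   Context: $\mathbb{C}$ is identified with $\mathbb{R}^2$, and $B(x,r)$ denotes the open disk of radius $r$ centered at $x$. A set $X\subset\mathbb{C}$ is $r$-relatively dense if $B(x,r)\cap X\neq\emptyset$ for every $x\in\mathbb{C}$, and relatively dense if it is $r$-relatively dense for some $r>0$. It is $s$-uniformly discrete if $\mathrm{Card}(B(x,s)\cap X)\le 1$ for every $x\in\mathbb{C}$, and uniformly discrete if this holds for some $s>0$. A Delone set is a set that is both relatively dense and uniformly discrete. A real number $\alpha$ is badly approximable if there is a constant $C>0$ with $q|q\alpha-p|\ge C$ for all $(p,q)\in\mathbb{Z}\times\mathbb{N}$. *)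

(* Defs.v *)
(* C is identified with R^2 = R * R. *)
From Stdlib Require Import Reals ZArith.
Open Scope R_scope.

Definition pt : Type := (R * R)%type.

Definition dist2 (p q : pt) : R :=
  sqrt ((fst p - fst q) ^ 2 + (snd p - snd q) ^ 2).

Definition in_ball (x : pt) (r : R) (y : pt) : Prop := dist2 x y < r.

Definition r_relatively_dense (r : R) (X : pt -> Prop) : Prop :=
  forall x : pt, exists y : pt, X y /\ in_ball x r y.

Definition relatively_dense (X : pt -> Prop) : Prop :=
  exists r : R, 0 < r /\ r_relatively_dense r X.

Definition s_uniformly_discrete (s : R) (X : pt -> Prop) : Prop :=
  forall x y z : pt, X y -> X z -> in_ball x s y -> in_ball x s z -> y = z.

Definition uniformly_discrete (X : pt -> Prop) : Prop :=
  exists s : R, 0 < s /\ s_uniformly_discrete s X.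

Definition Delone (X : pt -> Prop) : Prop :=
  relatively_dense X /\ uniformly_discrete X.

Definition badly_approximable (a : R) : Prop :=
  exists C : R, 0 < C /\
    forall (p : Z) (q : nat), (1 <= q)%nat ->
      INR q * Rabs (INR q * a - IZR p) >= C.

Definition Xsqrt (alpha : R) (y : pt) : Prop :=
  exists n : nat, (1 <= n)%nat /\
    y = (sqrt (INR n) * cos (2 * PI * INR n * alpha),
         sqrt (INR n) * sin (2 * PI * INR n * alpha)).

(* Main.v *)
Require Import Defs.
From Stdlib Require Import Reals ZArith Lra Lia Psatz Classical.
Open Scope R_scope.


Lemma Rabs_le_inv : forall a b, Rabs a <= b -> -b <= a <= b.
Proof. intros a b; unfold Rabs; destruct Rcase_abs; lra. Qed.

Lemma cos_ub2 : forall a, -2 <= a <= 2 -> cos a <= 1 - a^2/2 + a^4/24.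
Proof.
  intros a Ha. destruct (pre_cos_bound a 0 ltac:(lra) ltac:(lra)) as [_ H].
  unfold cos_approx, cos_term in H. simpl in H. unfold fact in H; simpl in H. nra.
Qed.

Lemma cos_lb2 : forall a, -2 <= a <= 2 -> 1 - a^2/2 <= cos a.
Proof.
  intros a Ha. destruct (pre_cos_bound a 0 ltac:(lra) ltac:(lra)) as [H _].
  unfold cos_approx, cos_term in H. simpl in H. nra.
Qed.

Lemma one_minus_cos_le : forall a, 1 - cos a <= a^2/2.
Proof.
  intros a. destruct (Rle_dec (Rabs a) 2) as [H|H].
  - apply Rabs_le_inv in H. pose proof (cos_lb2 a H). lra.
  - pose proof (COS_bound a). apply Rnot_le_lt in H.
    assert (4 < a^2). { destruct (Rle_dec 0 a). rewrite Rabs_right in H; nra. rewrite Rabs_left in H; nra. }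
    lra.
Qed.

Lemma one_minus_cos_ge : forall a, Rabs a <= PI -> a^2/12 <= 1 - cos a.
Proof.
  intros a Ha. pose proof PI2_3_2 as Hp1. pose proof PI_4 as Hp2.
  assert (Hpi : PI <= 4) by lra.
  destruct (Rle_dec (Rabs a) 2) as [H|H].
  - apply Rabs_le_inv in H. pose proof (cos_ub2 a H). assert (a^4 <= 4*a^2) by (replace (a^4) with (a^2*a^2) by ring; assert (a^2 <= 4) by nra; nra). pose proof (pow2_ge_0 a). lra.
  - apply Rnot_le_lt in H.
    assert (Hc : cos a <= -1/3).
    { assert (cos a = cos (Rabs a)).
      { destruct (Rle_dec 0 a). rewrite Rabs_right; lra. rewrite Rabs_left by lra. now rewrite cos_neg. }
      rewrite H0. apply Rle_trans with (cos 2).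
      - apply cos_decr_1; lra.
      - pose proof (cos_ub2 2 ltac:(lra)). lra. }
    assert (a^2 <= PI^2). { rewrite <- (pow2_abs a). apply pow_incr. split; [apply Rabs_pos|lra]. }
    assert (PI^2 <= 16) by nra. pose proof (pow2_ge_0 a). lra.
Qed.

Lemma cos_periodZ : forall x k, cos (x + 2 * IZR k * PI) = cos x.
Proof.
  intros x [|p|p].
  - simpl. f_equal. ring.
  - replace (IZR (Z.pos p)) with (INR (Pos.to_nat p)) by (rewrite INR_IZR_INZ, positive_nat_Z; reflexivity).
    apply cos_period.
  - replace (IZR (Z.neg p)) with (- INR (Pos.to_nat p)) by (rewrite INR_IZR_INZ, positive_nat_Z, <- opp_IZR; reflexivity).
    rewrite <- (cos_period (x + 2 * - INR (Pos.to_nat p) * PI) (Pos.to_nat p)).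
    f_equal. ring.
Qed.

Lemma cos_gap : forall t s, 0 <= s -> (forall k : Z, s <= Rabs (t - IZR k)) ->
  (2 * PI * s)^2 / 12 <= 1 - cos (2 * PI * t).
Proof.
  intros t s Hs Hk. destruct (archimed (t - 1/2)) as [H1 H2].
  set (k := up (t - 1/2)) in *.
  pose proof PI2_3_2.
  replace (2 * PI * t) with (2 * PI * (t - IZR k) + 2 * IZR k * PI) by ring.
  rewrite cos_periodZ.
  specialize (Hk k).
  assert (Rabs (2 * PI * (t - IZR k)) <= PI).
  { rewrite Rabs_mult, (Rabs_right (2*PI)) by lra.
    assert (Rabs (t - IZR k) <= 1/2). { apply Rabs_le; lra. } nra. }
  apply Rle_trans with ((2 * PI * (t - IZR k))^2/12); [|now apply one_minus_cos_ge].
  rewrite <- (pow2_abs (2 * PI * (t - IZR k))). rewrite Rabs_mult, (Rabs_right (2*PI)) by lra.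
  assert (0 <= 2 * PI * s <= 2 * PI * Rabs (t - IZR k)) by nra.
  assert ((2*PI*s)^2 <= (2 * PI * Rabs (t - IZR k))^2) by (apply pow_incr; lra). lra.
Qed.

Lemma polar_dist : forall a b u v,
  (a * cos u - b * cos v)^2 + (a * sin u - b * sin v)^2 =
  (a - b)^2 + 2 * a * b * (1 - cos (u - v)).
Proof.
  intros. rewrite cos_minus. pose proof (sin2_cos2 u). pose proof (sin2_cos2 v).
  unfold Rsqr in *. nra.
Qed.

Lemma dist2_lt : forall p q r, 0 <= r ->
  (fst p - fst q)^2 + (snd p - snd q)^2 < r^2 -> dist2 p q < r.
Proof.
  intros p q r Hr H. unfold dist2. rewrite <- (sqrt_pow2 r Hr).
  apply sqrt_lt_1_alt. split; [|exact H]; apply Rplus_le_le_0_compat; apply pow2_ge_0.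
Qed.

Lemma dist2_lt_inv : forall p q r,
  dist2 p q < r -> (fst p - fst q)^2 + (snd p - snd q)^2 < r^2.
Proof.
  intros p q r H. unfold dist2 in H.
  set (s := (fst p - fst q)^2 + (snd p - snd q)^2) in *.
  assert (0 <= s) by (unfold s; apply Rplus_le_le_0_compat; apply pow2_ge_0).
  pose proof (sqrt_pos s). rewrite <- (pow2_sqrt s) by lra. nra.
Qed.

Lemma nat_above : forall x, 0 <= x -> exists N : nat, x < INR N <= x + 1.
Proof.
  intros x H. destruct (archimed x) as [H1 H2].
  assert (0 <= up x)%Z. { apply le_IZR. lra. }
  exists (Z.to_nat (up x)). rewrite INR_IZR_INZ, Z2Nat.id by lia. lra.
Qed.

Lemma polar : forall x1 x2, 0 < sqrt (x1^2 + x2^2) ->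
  exists phi, x1 = sqrt (x1^2 + x2^2) * cos phi /\ x2 = sqrt (x1^2 + x2^2) * sin phi.
Proof.
  intros x1 x2 H. set (r := sqrt (x1^2 + x2^2)) in *.
  assert (Hr2 : r^2 = x1^2 + x2^2).
  { unfold r. apply pow2_sqrt. nra. }
  set (c := x1 / r).
  assert (Hc : -1 <= c <= 1).
  { unfold c. assert (x1^2 <= r^2) by nra. split.
    - apply Rmult_le_reg_r with r; [lra|]. unfold Rdiv. rewrite Rmult_assoc, Rinv_l by lra. nra.
    - apply Rmult_le_reg_r with r; [lra|]. unfold Rdiv. rewrite Rmult_assoc, Rinv_l by lra. nra. }
  assert (Hs : sqrt (1 - c^2) = Rabs x2 / r).
  { replace (1 - c^2) with ((Rabs x2 / r)^2).
    - apply sqrt_pow2. apply Rmult_le_pos; [apply Rabs_pos|]. left; apply Rinv_0_lt_compat; lra.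
    - assert (E : Rabs x2 ^ 2 = r^2 - x1^2) by (rewrite pow2_abs; lra).
      unfold c, Rdiv. rewrite !Rpow_mult_distr, E. field. lra. }
  assert (Hx1 : x1 = r * c) by (unfold c; field; lra).
  destruct (Rle_dec 0 x2) as [Hx|Hx].
  - exists (acos c). rewrite cos_acos by lra. rewrite sin_acos by lra.
    replace (c^2) with (c²) in Hs by (unfold Rsqr; ring). rewrite Hs.
    rewrite Rabs_right by lra. split; [lra|field; lra].
  - exists (- acos c). rewrite cos_neg, sin_neg, cos_acos by lra. rewrite sin_acos by lra.
    replace (c^2) with (c²) in Hs by (unfold Rsqr; ring). rewrite Hs.
    rewrite Rabs_left by lra. split; [lra|field; lra].
Qed.

Lemma pigeon : forall Q (f : nat -> nat), (forall i, (i <= Q)%nat -> (f i < Q)%nat) ->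
  exists i j, (i < j <= Q)%nat /\ f i = f j.
Proof.
  induction Q as [|Q IH]; intros f Hf.
  - specialize (Hf 0%nat ltac:(lia)). lia.
  - destruct (classic (exists i, (i <= Q)%nat /\ f i = f (S Q))) as [[i [Hi Hfi]]|Hno].
    + exists i, (S Q). split; [lia|exact Hfi].
    + set (g := fun i => if Nat.eqb (f i) Q then f (S Q) else f i).
      assert (Hg : forall i, (i <= Q)%nat -> (g i < Q)%nat).
      { intros i Hi. unfold g. destruct (Nat.eqb_spec (f i) Q).
        - assert (f (S Q) <> Q). { intro E. apply Hno. exists i. split; [lia|congruence]. }
          specialize (Hf (S Q) ltac:(lia)). lia.
        - specialize (Hf i ltac:(lia)). lia. }
      destruct (IH g Hg) as [i [j [Hij Hgij]]].
      exists i, j. split; [lia|]. unfold g in Hgij.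
      destruct (Nat.eqb_spec (f i) Q), (Nat.eqb_spec (f j) Q); try congruence.
      * exfalso. apply Hno. exists j. split; [lia|congruence].
      * exfalso. apply Hno. exists i. split; [lia|congruence].
Qed.

Definition fl (x : R) : Z := (up x - 1)%Z.
Lemma fl_spec : forall x, IZR (fl x) <= x < IZR (fl x) + 1.
Proof. intros x. unfold fl. rewrite minus_IZR. destruct (archimed x). simpl. lra. Qed.

Lemma fl_nonneg : forall x, 0 <= x -> (0 <= fl x)%Z.
Proof. intros x H. pose proof (fl_spec x). assert (-1 < IZR (fl x)) by lra.
  apply lt_IZR in H1. lia. Qed.

Lemma dirichlet : forall (alpha : R) (Q : nat), (1 <= Q)%nat ->
  exists (q : nat) (p : Z), (1 <= q <= Q)%nat /\ Rabs (INR q * alpha - IZR p) < 1 / INR Q.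
Proof.
  intros alpha Q HQ.
  assert (HQr : 1 <= INR Q) by (apply (le_INR 1); lia).
  set (fr := fun i : nat => INR i * alpha - IZR (fl (INR i * alpha))).
  assert (Hfr : forall i, 0 <= fr i < 1). { intro i. unfold fr. pose proof (fl_spec (INR i * alpha)). lra. }
  set (f := fun i => Z.to_nat (fl (INR Q * fr i))).
  assert (Hf : forall i, (i <= Q)%nat -> (f i < Q)%nat).
  { intros i _. unfold f. pose proof (fl_spec (INR Q * fr i)). specialize (Hfr i).
    assert (0 <= fl (INR Q * fr i))%Z by (apply fl_nonneg; nra).
    assert (fl (INR Q * fr i) < Z.of_nat Q)%Z. { apply lt_IZR. rewrite <- INR_IZR_INZ. nra. }
    lia. }
  destruct (pigeon Q f Hf) as [i [j [Hij Hfij]]].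
  exists (j - i)%nat, (fl (INR j * alpha) - fl (INR i * alpha))%Z. split; [lia|].
  unfold f in Hfij.
  pose proof (fl_spec (INR Q * fr i)). pose proof (fl_spec (INR Q * fr j)).
  assert (E : fl (INR Q * fr i) = fl (INR Q * fr j)).
  { pose proof (Hfr i). pose proof (Hfr j).
    assert (0 <= fl (INR Q * fr i))%Z by (apply fl_nonneg; nra).
    assert (0 <= fl (INR Q * fr j))%Z by (apply fl_nonneg; nra).
    lia. }
  rewrite E in H. 
  assert (Habs : Rabs (INR Q * fr j - INR Q * fr i) < 1). { apply Rabs_def1; lra. }
  rewrite minus_INR by lia. rewrite minus_IZR.
  replace ((INR j - INR i) * alpha - (IZR (fl (INR j * alpha)) - IZR (fl (INR i * alpha))))
    with (fr j - fr i) by (unfold fr; ring).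
  replace (INR Q * fr j - INR Q * fr i) with (INR Q * (fr j - fr i)) in Habs by ring.
  rewrite Rabs_mult, Rabs_right in Habs by lra.
  apply Rmult_lt_reg_l with (INR Q); [lra|]. field_simplify; lra.
Qed.

Lemma dirichlet_coprime : forall (alpha : R) (Q : nat), (1 <= Q)%nat ->
  exists (q : nat) (p u v : Z), (1 <= q <= Q)%nat /\ Rabs (INR q * alpha - IZR p) < 1 / INR Q
    /\ (u * p + v * Z.of_nat q = 1)%Z.
Proof.
  intros alpha Q HQ.
  destruct (dirichlet alpha Q HQ) as [q0 [p0 [Hq0 Hp0]]].
  set (g := Z.gcd p0 (Z.of_nat q0)).
  assert (Hg0 : (0 <= g)%Z) by apply Z.gcd_nonneg.
  assert (Hgn : g <> 0%Z). { intro E. apply Z.gcd_eq_0 in E. lia. }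
  destruct (Z.gcd_divide_l p0 (Z.of_nat q0)) as [p1 Hp1].
  destruct (Z.gcd_divide_r p0 (Z.of_nat q0)) as [q1 Hq1].
  fold g in Hp1, Hq1.
  assert (Hc : Z.gcd (p0 / g) (Z.of_nat q0 / g) = 1%Z) by (apply Z.gcd_div_gcd; auto).
  rewrite Hp1, Hq1, !Z.div_mul in Hc by auto.
  destruct (Z.gcd_bezout _ _ _ Hc) as [u [v Huv]].
  assert (Hq1pos : (1 <= q1)%Z) by nia.
  assert (Hgpos : (1 <= g)%Z) by lia.
  exists (Z.to_nat q1), p1, u, v. rewrite Z2Nat.id by lia. split; [|split; [|exact Huv]].
  - split; [lia|]. nia.
  - rewrite INR_IZR_INZ, Z2Nat.id by lia.
    assert (E : INR q0 * alpha - IZR p0 = IZR g * (IZR q1 * alpha - IZR p1)).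
    { rewrite INR_IZR_INZ, Hq1, Hp1, !mult_IZR. ring. }
    rewrite E, Rabs_mult, Rabs_right in Hp0 by (apply Rle_ge, IZR_le; lia).
    assert (1 <= IZR g) by (apply IZR_le; lia).
    pose proof (Rabs_pos (IZR q1 * alpha - IZR p1)). nra.
Qed.

Lemma sep_bound : forall a b q c, 1 <= a -> 1 <= q -> b * b = a * a + q -> 0 <= b -> 0 < c ->
  Rmin (1/9) (6 * c^2) <= (b - a)^2 + 2 * a * b * (3 * c^2 / q^2).
Proof.
  intros a b q c Ha Hq Hb Hb0 Hc.
  assert (Hab : a < b) by nra.
  set (d := b - a).
  assert (Hd : d * (b + a) = q) by (unfold d; nra).
  assert (Hd0 : 0 < d) by (unfold d; lra).
  assert (Hterm : 0 <= 2 * a * b * (3 * c^2 / q^2)).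
  { apply Rmult_le_pos; [nra|]. apply Rmult_le_pos; [nra|]. left; apply Rinv_0_lt_compat; nra. }
  destruct (Rle_dec q (a*a)) as [H1|H1].
  - assert (b <= 2 * a) by nra.
    assert (q <= 3 * a * d) by nra.
    destruct (Rle_dec a q) as [H2|H2].
    + assert (1/9 <= d^2).
      { assert (a <= 3 * a * d) by lra. assert (1 <= 3 * d) by nra. nra. }
      pose proof (Rmin_l (1/9) (6*c^2)). lra.
    + assert (6 * c^2 <= 2 * a * b * (3 * c^2 / q^2)).
      { assert (a * a <= a * b) by nra.
        assert (q^2 <= a * a) by nra.
        assert (0 < q^2) by nra.
        replace (2 * a * b * (3 * c^2 / q^2)) with (6 * c^2 * (a * b) / q^2) by (field; lra).
        apply Rmult_le_reg_r with (q^2); [lra|]. replace (6 * c ^ 2 * (a * b) / q ^ 2 * q ^ 2) with (6 * c^2 * (a*b)) by (field; lra).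
        assert (0 <= c^2) by nra. nra. }
      pose proof (Rmin_r (1/9) (6*c^2)). nra.
  - assert (b * b < 2 * q) by nra.
    assert (q <= 2 * b * d) by nra.
    assert (q * q <= 4 * (b * b) * (d * d)) by nra.
    assert (q <= 8 * (d * d)) by nra.
    pose proof (Rmin_l (1/9) (6*c^2)). nra.
Qed.

Definition zpt (alpha : R) (n : nat) : pt :=
  (sqrt (INR n) * cos (2 * PI * INR n * alpha), sqrt (INR n) * sin (2 * PI * INR n * alpha)).

Lemma Xsqrt_zpt : forall alpha y, Xsqrt alpha y <-> exists n, (1 <= n)%nat /\ y = zpt alpha n.
Proof. intros. unfold Xsqrt, zpt. tauto. Qed.

Lemma zdist : forall alpha n m,
  (fst (zpt alpha n) - fst (zpt alpha m))^2 + (snd (zpt alpha n) - snd (zpt alpha m))^2 =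
  (sqrt (INR n) - sqrt (INR m))^2 + 2 * sqrt (INR n) * sqrt (INR m) * (1 - cos (2 * PI * ((INR m - INR n) * alpha))).
Proof.
  intros. cbv [zpt fst snd]. rewrite polar_dist. do 3 f_equal.
  rewrite <- cos_neg. f_equal. ring.
Qed.

Lemma PI_gt3 : 3 < PI.
Proof. pose proof PI2_3_2. lra. Qed.

Lemma ba_sep : forall alpha C, 0 < C ->
  (forall (p : Z) (q : nat), (1 <= q)%nat -> INR q * Rabs (INR q * alpha - IZR p) >= C) ->
  forall n m, (1 <= n)%nat -> (n < m)%nat ->
  Rmin (1/9) (6 * C^2) <=
  (fst (zpt alpha n) - fst (zpt alpha m))^2 + (snd (zpt alpha n) - snd (zpt alpha m))^2.
Proof.
  intros alpha C HC HBA n m Hn Hm.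
  rewrite zdist.
  set (q := INR m - INR n).
  assert (Hq : q = INR (m - n)) by (unfold q; rewrite minus_INR by lia; ring).
  assert (Hq1 : 1 <= q) by (rewrite Hq; apply (le_INR 1); lia).
  assert (Hn1 : 1 <= INR n) by (apply (le_INR 1); lia).
  assert (Hgap : (2 * PI * (C / q))^2 / 12 <= 1 - cos (2 * PI * (q * alpha))).
  { apply cos_gap. { apply Rmult_le_pos; [lra|]. left; apply Rinv_0_lt_compat; lra. }
    intro k. specialize (HBA k (m - n)%nat ltac:(lia)). rewrite <- Hq in HBA.
    apply Rmult_le_reg_l with q; [lra|]. replace (q * (C / q)) with C by (field; lra). lra. }
  assert (H3 : 3 * C^2 / q^2 <= (2 * PI * (C / q))^2 / 12).
  { pose proof PI_gt3. replace ((2 * PI * (C / q))^2 / 12) with (PI^2 / 3 * (C^2 / q^2)) by (field; lra).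
    replace (3 * C^2 / q^2) with (3 * (C^2 / q^2)) by (field; lra).
    apply Rmult_le_compat_r. { unfold Rdiv. apply Rmult_le_pos; [nra|]. left; apply Rinv_0_lt_compat; nra. }
    nra. }
  rewrite <- (Rsqr_neg_minus (sqrt (INR m))) || idtac.
  replace ((sqrt (INR n) - sqrt (INR m))^2) with ((sqrt (INR m) - sqrt (INR n))^2) by ring.
  eapply Rle_trans.
  - apply (sep_bound (sqrt (INR n)) (sqrt (INR m)) q C).
    + rewrite <- sqrt_1. apply sqrt_le_1_alt. lra.
    + lra.
    + assert (1 <= INR m) by (apply (le_INR 1); lia). rewrite !sqrt_sqrt by lra. unfold q. lra.
    + apply sqrt_pos.
    + lra.
  - apply Rplus_le_compat_l. apply Rmult_le_compat_l.
    + pose proof (sqrt_pos (INR n)); pose proof (sqrt_pos (INR m)). nra.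
    + lra.
Qed.

Lemma zpt_norm : forall alpha n, (fst (zpt alpha n))^2 + (snd (zpt alpha n))^2 = INR n.
Proof.
  intros. cbv [zpt fst snd]. pose proof (sin2_cos2 (2 * PI * INR n * alpha)). unfold Rsqr in H.
  pose proof (pos_INR n).
  set (u := 2 * PI * INR n * alpha) in *.
  transitivity (sqrt (INR n) * sqrt (INR n) * (sin u * sin u + cos u * cos u)); [ring|].
  rewrite H, sqrt_sqrt by lra. ring.
Qed.

Lemma zpt_inj : forall alpha n m, zpt alpha n = zpt alpha m -> n = m.
Proof.
  intros alpha n m E. apply INR_eq. rewrite <- (zpt_norm alpha n), <- (zpt_norm alpha m), E. reflexivity.
Qed.

Lemma par_ineq : forall x y z : pt,
  (fst y - fst z)^2 + (snd y - snd z)^2 <=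
  2 * ((fst x - fst y)^2 + (snd x - snd y)^2) + 2 * ((fst x - fst z)^2 + (snd x - snd z)^2).
Proof. intros [x1 x2] [y1 y2] [z1 z2]. simpl. pose proof (pow2_ge_0 (2*x1 - y1 - z1)). pose proof (pow2_ge_0 (2*x2 - y2 - z2)). nra. Qed.

Lemma ba_ud : forall alpha, badly_approximable alpha -> uniformly_discrete (Xsqrt alpha).
Proof.
  intros alpha [C [HC HBA]].
  set (T := Rmin (1/9) (6 * C^2)).
  assert (HT : 0 < T). { unfold T. apply Rmin_glb_lt; nra. }
  exists (sqrt T / 2). split. { pose proof (sqrt_lt_R0 T HT). lra. }
  intros x y z Hy Hz Hxy Hxz.
  apply Xsqrt_zpt in Hy as [n [Hn ->]]. apply Xsqrt_zpt in Hz as [m [Hm ->]].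
  destruct (Nat.lt_trichotomy n m) as [Hnm|[Hnm|Hnm]]; [|now subst|]; exfalso.
  - apply dist2_lt_inv in Hxy, Hxz.
    pose proof (par_ineq x (zpt alpha n) (zpt alpha m)).
    pose proof (ba_sep alpha C HC HBA n m Hn Hnm).
    assert (E4 : (sqrt T / 2)^2 = T / 4) by (unfold Rdiv; rewrite Rpow_mult_distr, pow2_sqrt by lra; field).
    fold (zpt alpha n) (zpt alpha m) in Hxy, Hxz. fold T in H0. lra.
  - apply dist2_lt_inv in Hxy, Hxz.
    pose proof (par_ineq x (zpt alpha m) (zpt alpha n)).
    pose proof (ba_sep alpha C HC HBA m n Hm Hnm).
    assert (E4 : (sqrt T / 2)^2 = T / 4) by (unfold Rdiv; rewrite Rpow_mult_distr, pow2_sqrt by lra; field).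
    fold (zpt alpha n) (zpt alpha m) in Hxy, Hxz. fold T in H0. lra.
Qed.

Lemma close_bound : forall a b Q N eta e w,
  0 <= a -> 0 <= b -> a * a = N -> b * b = N + Q -> 1 <= Q -> 0 < eta <= 1 ->
  Q^2 / eta < N -> N <= Q^2/eta + 1 -> Rabs e < eta / Q -> 0 <= w -> w <= (2 * PI * e)^2 / 2 ->
  (a - b)^2 + 2 * a * b * w < 300 * eta.
Proof.
  intros a b Q N eta e w Ha Hb HaN HbN HQ Heta HN1 HN2 He Hw0 Hw.
  pose proof PI_4 as Hpi4. pose proof PI_RGT_0 as Hpi0.
  assert (HQe : Q^2 / eta >= Q^2) by (apply Rle_ge; apply Rmult_le_reg_r with eta; [lra|];
     unfold Rdiv; rewrite Rmult_assoc, Rinv_l by lra; nra).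
  assert (HNQ : Q <= N) by nra.
  assert (Hapos : 0 < a) by nra.
  assert (Hab : a < b) by nra.
  assert (H1 : (b - a) * (b + a) = Q) by nra.
  assert (H2 : (b - a) * (2 * a) <= Q) by nra.
  assert (H3 : (b - a)^2 * (4 * N) <= Q^2).
  { replace ((b - a)^2 * (4 * N)) with (((b - a) * (2 * a))^2) by (rewrite <- HaN; ring). apply pow_incr. split; [nra|exact H2]. }
  assert (H4 : (a - b)^2 < eta / 4).
  { assert (Q^2 < eta * N).
    { apply Rmult_lt_reg_r with (/ eta). apply Rinv_0_lt_compat; lra.
      replace (eta * N * / eta) with N by (field; lra). exact HN1. }
    nra. }
  assert (H5 : a * b <= 2 * N) by nra.
  assert (He2 : e^2 * Q^2 < eta^2).
  { rewrite <- (pow2_abs e). assert (Rabs e * Q < eta).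
    { apply Rmult_lt_reg_r with (/Q). apply Rinv_0_lt_compat; lra.
      replace (Rabs e * Q * / Q) with (Rabs e) by (field; lra). exact He. }
    pose proof (Rabs_pos e). replace (Rabs e ^ 2 * Q ^ 2) with ((Rabs e * Q)^2) by ring.
    assert (0 <= Rabs e * Q) by nra. nra. }
  assert (H6 : N * e^2 <= 2 * eta).
  { assert (HQ2 : 1 <= Q^2) by nra. assert (e^2 * 1 <= e^2 * Q^2) by (apply Rmult_le_compat_l; [apply pow2_ge_0|lra]).
    assert (Hee : e^2 < eta^2) by lra.
    assert (N*e^2 <= (Q^2/eta + 1)*e^2) by (apply Rmult_le_compat_r; [apply pow2_ge_0|lra]).
    assert (E1 : (Q^2/eta)*e^2 = (e^2*Q^2)/eta) by (field; lra).
    assert ((e^2*Q^2)/eta < eta).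
    { apply Rmult_lt_reg_r with eta; [lra|]. replace (e^2*Q^2/eta*eta) with (e^2*Q^2) by (field; lra). nra. }
    nra. }
  assert (H7 : 2 * a * b * w <= 8 * PI^2 * (N * e^2) * 2).
  { assert (w <= 2 * PI^2 * e^2) by (replace (2 * PI^2 * e^2) with ((2 * PI * e)^2/2) by field; lra).
    assert (0 <= a * b) by nra. nra. }
  assert (PI^2 <= 16) by nra.
  assert (0 <= N * e^2) by nra.
  nra.
Qed.

Lemma zpt_X : forall alpha n, (1 <= n)%nat -> Xsqrt alpha (zpt alpha n).
Proof. intros. apply Xsqrt_zpt. eauto. Qed.

Lemma dist2_refl : forall p, dist2 p p = 0.
Proof. intros. unfold dist2. replace ((fst p - fst p)^2 + (snd p - snd p)^2) with 0 by ring. apply sqrt_0. Qed.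

Lemma not_ba : forall alpha, ~ badly_approximable alpha ->
  forall eta, 0 < eta -> exists (p : Z) (q : nat), (1 <= q)%nat /\ INR q * Rabs (INR q * alpha - IZR p) < eta.
Proof.
  intros alpha HnBA eta Heta. apply NNPP. intro H. apply HnBA. exists eta. split; [lra|].
  intros p q Hq. apply Rnot_lt_ge. intro Hlt. apply H. eauto.
Qed.

Lemma ud_ba : forall alpha, uniformly_discrete (Xsqrt alpha) -> badly_approximable alpha.
Proof.
  intros alpha [s [Hs HUD]]. apply NNPP. intro HnBA.
  set (s' := Rmin s 1).
  assert (Hs' : 0 < s' <= 1) by (unfold s'; split; [apply Rmin_glb_lt; lra|apply Rmin_r]).
  assert (Hss : s' <= s) by apply Rmin_l.
  set (eta := s'^2 / 300).
  assert (Heta : 0 < eta <= 1) by (unfold eta; split; nra).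
  destruct (not_ba alpha HnBA eta ltac:(lra)) as [p [q [Hq Hpq]]].
  set (Q := INR q).
  assert (HQ : 1 <= Q) by (apply (le_INR 1); lia).
  destruct (nat_above (Q^2/eta)) as [N [HN1 HN2]].
  { unfold Rdiv. apply Rmult_le_pos; [nra|left; apply Rinv_0_lt_compat; lra]. }
  assert (HNpos : (1 <= N)%nat).
  { destruct N; [|lia]. exfalso. simpl in HN1. assert (0 < Q^2/eta) by (apply Rdiv_lt_0_compat; nra). lra. }
  set (m := (N + q)%nat).
  assert (E : zpt alpha N = zpt alpha m).
  { apply (HUD (zpt alpha N)); try (apply zpt_X; unfold m; lia).
    - unfold in_ball. rewrite dist2_refl. lra.
    - unfold in_ball. apply dist2_lt; [lra|]. rewrite zdist.
      apply Rlt_le_trans with (s'^2); [|apply pow_incr; lra].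
      replace (s'^2) with (300 * eta) by (unfold eta; field).
      assert (HmN : INR m - INR N = Q) by (unfold m, Q; rewrite plus_INR; ring).
      rewrite HmN.
      set (e := Q * alpha - IZR p).
      replace (2 * PI * (Q * alpha)) with (2 * PI * e + 2 * IZR p * PI) by (unfold e; ring).
      rewrite cos_periodZ.
      pose proof (pos_INR N).
      apply (close_bound _ _ Q (INR N) eta e).
      + apply sqrt_pos.
      + apply sqrt_pos.
      + apply sqrt_sqrt; lra.
      + pose proof (pos_INR q). rewrite sqrt_sqrt; unfold m, Q; rewrite ?plus_INR; lra.
      + exact HQ.
      + exact Heta.
      + exact HN1.
      + exact HN2.
      + apply Rmult_lt_reg_l with Q; [lra|]. replace (Q * (eta / Q)) with eta by (field; lra). exact Hpq.
      + pose proof (COS_bound (2 * PI * e)). lra.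
      + apply one_minus_cos_le. }
  apply zpt_inj in E. unfold m in E. lia.
Qed.

Lemma IZR_abs_ge1 : forall w : Z, w <> 0%Z -> 1 <= Rabs (IZR w).
Proof. intros w Hw. rewrite <- abs_IZR. apply IZR_le. lia. Qed.

Lemma odd_gap : forall (m p k : Z) (q : nat), (1 <= q)%nat ->
  1 / (2 * INR q) <= Rabs (IZR (2 * m * p + 1) / (2 * INR q) - IZR k).
Proof.
  intros m p k q Hq.
  assert (HQ : 1 <= INR q) by (apply (le_INR 1); lia).
  replace (IZR (2 * m * p + 1) / (2 * INR q) - IZR k)
    with (IZR (2 * m * p + 1 - 2 * Z.of_nat q * k) / (2 * INR q))
    by (rewrite INR_IZR_INZ; rewrite !minus_IZR, !plus_IZR, !mult_IZR; field; rewrite <- INR_IZR_INZ; lra).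
  unfold Rdiv. rewrite Rabs_mult, (Rabs_right (/ (2 * INR q))).
  2: { apply Rle_ge. left. apply Rinv_0_lt_compat. lra. }
  assert (1 <= Rabs (IZR (2 * m * p + 1 - 2 * Z.of_nat q * k))) by (apply IZR_abs_ge1; lia).
  assert (0 < / (2 * INR q)) by (apply Rinv_0_lt_compat; lra).
  nra.
Qed.

Lemma final_contra : forall R sn r Q w,
  0 < r -> 1 <= Q -> 3 * r * Q < R -> Rabs (R - sn) < r -> 0 <= sn ->
  3 / (16 * Q^2) <= w -> r^2 < 2 * R * sn * w.
Proof.
  intros R sn r Q w Hr HQ HR Hsn Hsn0 Hw.
  assert (Hsn1 : R - r < sn) by (unfold Rabs in Hsn; destruct Rcase_abs; lra).
  assert (H1 : 2 * R / 3 <= sn) by nra.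
  assert (HQ2 : 0 < Q^2) by nra.
  assert (HA : 0 < 3 / (16 * Q^2)) by (apply Rdiv_lt_0_compat; nra).
  set (A := 3 / (16 * Q^2)) in *.
  assert (HR0 : 0 < R) by nra.
  assert (H3 : (2 * R / 3) * A <= sn * w).
  { assert (0 <= (sn - 2 * R / 3) * w) by (apply Rmult_le_pos; lra). assert (0 <= (2 * R / 3) * (w - A)) by (apply Rmult_le_pos; lra). nra. }
  assert (H2 : 2 * R * sn * w >= 2 * R * (2 * R / 3) * A) by nra.
  unfold A in H2.
  replace (2 * R * (2 * R / 3) * (3 / (16 * Q^2))) with (R^2 / (4 * Q^2)) in H2 by (field; lra).
  assert (9 * r^2 * Q^2 < R^2).
  { replace (9 * r^2 * Q^2) with ((3*r*Q)^2) by ring. assert (0 <= 3*r*Q) by nra. nra. }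
  assert (R^2 / (4 * Q^2) > 2 * r^2).
  { apply Rmult_gt_reg_l with (4 * Q^2); [nra|]. replace (4 * Q^2 * (R^2 / (4*Q^2))) with (R^2) by (field; lra). nra. }
  nra.
Qed.

Lemma rd_ba : forall alpha, relatively_dense (Xsqrt alpha) -> badly_approximable alpha.
Proof.
  intros alpha [r [Hr HRD]]. apply NNPP. intro HnBA.
  set (eps := 1 / (12 * r * (3 * r + 1))).
  assert (Heps : 0 < eps) by (unfold eps; apply Rdiv_lt_0_compat; nra).
  destruct (not_ba alpha HnBA eps Heps) as [p [q [Hq Hpq]]].
  set (Q := INR q) in *.
  assert (HQ : 1 <= Q) by (apply (le_INR 1); lia).
  set (e := Q * alpha - IZR p) in *.
  assert (He : Rabs e < eps / Q).
  { apply Rmult_lt_reg_l with Q; [lra|]. replace (Q * (eps / Q)) with eps by (field; lra). exact Hpq. }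
  destruct (nat_above ((3 * r * Q)^2)) as [N [HN1 HN2]]; [apply pow2_ge_0|].
  set (R0 := sqrt (INR N)).
  assert (HN0 : 0 <= INR N) by apply pos_INR.
  assert (HR2 : R0 * R0 = INR N) by (apply sqrt_sqrt; lra).
  assert (HR0 : 0 <= R0) by apply sqrt_pos.
  assert (HRlow : 3 * r * Q < R0).
  { assert (0 <= 3 * r * Q) by nra. nra. }
  assert (HRup : R0 <= (3 * r + 1) * Q).
  { assert (1 <= Q^2) by nra. assert (0 <= 6*r*Q^2) by nra.
    assert (R0 * R0 <= ((3 * r + 1) * Q)^2) by (replace (((3*r+1)*Q)^2) with ((3*r*Q)^2 + 6*r*Q^2 + Q^2) by ring; lra).
    assert (0 <= (3 * r + 1) * Q) by nra. nra. }
  set (phi := 2 * PI * INR N * alpha + PI / Q).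
  destruct (HRD (R0 * cos phi, R0 * sin phi)) as [y [Hy Hd]].
  apply Xsqrt_zpt in Hy as [n [Hn ->]].
  apply dist2_lt_inv in Hd. cbv [zpt fst snd] in Hd. rewrite polar_dist in Hd.
  set (sn := sqrt (INR n)) in *.
  assert (Hsn0 : 0 <= sn) by apply sqrt_pos.
  assert (Hsn2 : sn * sn = INR n) by (apply sqrt_sqrt; apply pos_INR).
  assert (Hw0 : 0 <= 1 - cos (phi - 2 * PI * INR n * alpha)) by (pose proof (COS_bound (phi - 2 * PI * INR n * alpha)); lra).
  destruct (Rlt_dec (Rabs (R0 - sn)) r) as [Hclose|Hfar].
  2: { assert (r^2 <= (R0 - sn)^2) by (rewrite <- (pow2_abs (R0 - sn)); apply pow_incr; lra).
       assert (0 <= 2 * R0 * sn * (1 - cos (phi - 2 * PI * INR n * alpha))) by (apply Rmult_le_pos; nra).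
       lra. }
  assert (Habsm : Rabs (INR N - INR n) < 3 * r * R0).
  { replace (INR N - INR n) with ((R0 - sn) * (R0 + sn)) by nra.
    rewrite Rabs_mult, (Rabs_right (R0 + sn)) by lra.
    assert (R0 + sn < 2 * R0 + r) by (unfold Rabs in Hclose; destruct Rcase_abs; lra).
    pose proof (Rabs_pos (R0 - sn)).
    apply Rle_lt_trans with (r * (2 * R0 + r)); [|nra].
    apply Rmult_le_compat; lra. }
  set (mZ := (Z.of_nat N - Z.of_nat n)%Z).
  assert (HmZ : IZR mZ = INR N - INR n) by (unfold mZ; rewrite minus_IZR, <- !INR_IZR_INZ; reflexivity).
  set (t := IZR mZ * alpha + 1 / (2 * Q)).
  assert (Hphi : phi - 2 * PI * INR n * alpha = 2 * PI * t) by (unfold phi, t; rewrite HmZ; field; lra).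
  assert (Halpha : alpha = (IZR p + e) / Q) by (unfold e; field; lra).
  assert (Ht : t = IZR (2 * mZ * p + 1) / (2 * Q) + IZR mZ * e / Q).
  { unfold t. rewrite Halpha at 1. rewrite plus_IZR, !mult_IZR. field. lra. }
  assert (Hsmall : Rabs (IZR mZ * e / Q) <= 1 / (4 * Q)).
  { unfold Rdiv. rewrite !Rabs_mult, (Rabs_right (/ Q)) by (apply Rle_ge; left; apply Rinv_0_lt_compat; lra).
    rewrite HmZ.
    assert (Rabs (INR N - INR n) * Rabs e <= 3 * r * R0 * (eps / Q)).
    { apply Rmult_le_compat; try apply Rabs_pos; lra. }
    assert (3 * r * R0 * (eps / Q) <= 3 * r * ((3 * r + 1) * Q) * (eps / Q)).
    { apply Rmult_le_compat_r; [apply Rlt_le, Rdiv_lt_0_compat; lra|]. nra. }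
    replace (3 * r * ((3 * r + 1) * Q) * (eps / Q)) with (1/4) in H0 by (unfold eps; field; nra).
    replace (1 * / (4 * Q)) with (1/4 * / Q) by (field; lra).
    apply Rmult_le_compat_r; [left; apply Rinv_0_lt_compat; lra|]. lra. }
  assert (Hgap : forall k : Z, 1 / (4 * Q) <= Rabs (t - IZR k)).
  { intro k. pose proof (odd_gap mZ p k q Hq). fold Q in H.
    rewrite Ht.
    replace (IZR (2 * mZ * p + 1) / (2 * Q) + IZR mZ * e / Q - IZR k)
      with ((IZR (2 * mZ * p + 1) / (2 * Q) - IZR k) + IZR mZ * e / Q) by ring.
    pose proof (Rabs_triang_inv (IZR (2 * mZ * p + 1) / (2 * Q) - IZR k) (- (IZR mZ * e / Q))).
    rewrite Rabs_Ropp in H0. replace (IZR (2 * mZ * p + 1) / (2 * Q) - IZR k - - (IZR mZ * e / Q)) with (IZR (2 * mZ * p + 1) / (2 * Q) - IZR k + IZR mZ * e / Q) in H0 by ring.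
    replace (1 / (2 * Q)) with (2 * (1 / (4 * Q))) in H by (field; lra).
    lra. }
  pose proof (cos_gap t (1 / (4 * Q)) ltac:(left; apply Rdiv_lt_0_compat; lra) Hgap) as Hcg.
  rewrite <- Hphi in Hcg.
  assert (Hw : 3 / (16 * Q^2) <= 1 - cos (phi - 2 * PI * INR n * alpha)).
  { eapply Rle_trans; [|exact Hcg]. pose proof PI_gt3.
    replace ((2 * PI * (1 / (4 * Q)))^2 / 12) with (PI^2 / (48 * Q^2)) by (field; lra).
    apply Rmult_le_reg_r with (48 * Q^2); [nra|].
    replace (3 / (16 * Q ^ 2) * (48 * Q ^ 2)) with 9 by (field; lra).
    replace (PI ^ 2 / (48 * Q ^ 2) * (48 * Q ^ 2)) with (PI^2) by (field; lra). nra. }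
  pose proof (final_contra R0 sn r Q _ Hr HQ HRlow Hclose Hsn0 Hw).
  pose proof (pow2_ge_0 (R0 - sn)). lra.
Qed.

Lemma rd_final : forall rho sn Nn Q K D w,
  2 <= rho -> rho^2 < Nn -> Nn <= rho^2 + rho -> 0 <= sn -> sn * sn = Nn ->
  rho - 1 < Q -> Rabs D < K / Q -> 0 <= w -> w <= (2 * PI * D)^2 / 2 ->
  (rho - sn)^2 + 2 * rho * sn * w < 10 + 512 * K^2.
Proof.
  intros rho sn Nn Q K D w Hr HN1 HN2 Hsn HsnN HQ HD Hw0 Hw.
  pose proof PI_4. pose proof PI_RGT_0.
  assert (HQ2 : rho / 2 <= Q) by lra.
  assert (HQp : 0 < Q) by lra.
  assert (Hsr : rho < sn) by nra.
  assert (Hd : (sn - rho) * (sn + rho) <= rho) by nra.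
  assert (Hd2 : sn - rho <= 1/2) by nra.
  assert (H1 : (rho - sn)^2 <= 1/4) by nra.
  assert (H2 : sn <= 2 * rho) by lra.
  assert (HDQ : Rabs D * Q < K).
  { apply Rmult_lt_reg_r with (/Q). apply Rinv_0_lt_compat; lra.
    replace (Rabs D * Q * / Q) with (Rabs D) by (field; lra). exact HD. }
  assert (HDQ2 : D^2 * Q^2 <= K^2).
  { rewrite <- (pow2_abs D). replace (Rabs D ^ 2 * Q ^ 2) with ((Rabs D * Q)^2) by ring.
    pose proof (Rabs_pos D). apply pow_incr. split; nra. }
  assert (HD2 : D^2 * rho^2 <= 4 * K^2).
  { assert (rho^2 <= 4 * Q^2) by nra. pose proof (pow2_ge_0 D). nra. }
  assert (Hw2 : w <= 2 * PI^2 * D^2) by (replace (2 * PI^2 * D^2) with ((2*PI*D)^2/2) by field; lra).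
  assert (H3 : 2 * rho * sn * w <= 4 * rho^2 * (2 * PI^2 * D^2)).
  { assert (0 <= 2 * rho * sn <= 4 * rho^2) by nra.
    apply Rmult_le_compat; try lra. }
  assert (H4 : 4 * rho^2 * (2 * PI^2 * D^2) <= 8 * 16 * (4 * K^2)).
  { replace (4 * rho^2 * (2 * PI^2 * D^2)) with (8 * PI^2 * (D^2 * rho^2)) by ring.
    assert (PI^2 <= 16) by nra. pose proof (pow2_ge_0 D). pose proof (pow2_ge_0 rho).
    apply Rmult_le_compat; try nra. }
  pose proof (pow2_ge_0 K). lra.
Qed.

Lemma ba_rd : forall alpha, badly_approximable alpha -> relatively_dense (Xsqrt alpha).
Proof.
  intros alpha [C0 [HC0 HBA0]].
  set (C := Rmin C0 1).
  assert (HC : 0 < C <= 1) by (unfold C; split; [apply Rmin_glb_lt; lra|apply Rmin_r]).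
  assert (HBA : forall (p : Z) (q : nat), (1 <= q)%nat -> INR q * Rabs (INR q * alpha - IZR p) >= C).
  { intros p q Hq. specialize (HBA0 p q Hq). pose proof (Rmin_l C0 1). fold C in H. lra. }
  set (K := 1 + 1 / C).
  set (r := sqrt (10 + 512 * K^2)).
  assert (Hr2 : r^2 = 10 + 512 * K^2) by (unfold r; apply pow2_sqrt; nra).
  assert (Hr : 0 < r) by (unfold r; apply sqrt_lt_R0; nra).
  exists r. split; [exact Hr|].
  intros [x1 x2].
  set (rho := sqrt (x1^2 + x2^2)).
  assert (Hrho2 : rho^2 = x1^2 + x2^2) by (unfold rho; apply pow2_sqrt; nra).
  assert (Hrho0 : 0 <= rho) by apply sqrt_pos.
  destruct (Rlt_dec rho 2) as [Hsmall|Hbig].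
  - exists (zpt alpha 1). split; [apply zpt_X; lia|].
    unfold in_ball. apply dist2_lt; [lra|]. pose proof (zpt_norm alpha 1) as Hn1.
    change (fst (x1, x2)) with x1. change (snd (x1, x2)) with x2.
    set (y1 := fst (zpt alpha 1)) in *. set (y2 := snd (zpt alpha 1)) in *.
    replace (INR 1) with 1 in Hn1 by reflexivity.
    pose proof (pow2_ge_0 (x1 + y1)). pose proof (pow2_ge_0 (x2 + y2)).
    assert (E1 : (x1 - y1)^2 + (x1 + y1)^2 = 2 * x1^2 + 2 * y1^2) by ring.
    assert (E2 : (x2 - y2)^2 + (x2 + y2)^2 = 2 * x2^2 + 2 * y2^2) by ring.
    assert (rho^2 < 4) by nra. pose proof (pow2_ge_0 K). lra.
  - apply Rnot_lt_le in Hbig.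
    destruct (polar x1 x2 ltac:(fold rho; lra)) as [phi [Hx1 Hx2]]. fold rho in Hx1, Hx2.
    destruct (nat_above (rho - 1)) as [Q [HQ1 HQ2]]; [lra|].
    assert (HQ : (1 <= Q)%nat). { destruct Q; [simpl in HQ1; lra|lia]. }
    destruct (dirichlet_coprime alpha Q HQ) as [q [p [u [v [Hq [He Huv]]]]]].
    set (e := INR q * alpha - IZR p) in *.
    assert (HqR : 1 <= INR q) by (apply (le_INR 1); lia).
    assert (HQR : 0 < INR Q) by lra.
    assert (HCq : C * INR Q < INR q).
    { specialize (HBA p q (proj1 Hq)). fold e in HBA.
      assert (INR q * Rabs e < INR q / INR Q).
      { apply Rmult_lt_compat_l; lra. }
      assert (C < INR q / INR Q) by lra.
      apply Rmult_lt_reg_r with (/ INR Q). apply Rinv_0_lt_compat; lra.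
      replace (C * INR Q * / INR Q) with C by (field; lra). exact H0. }
    destruct (nat_above (rho^2)) as [M [HM1 HM2]]; [nra|].
    set (qZ := Z.of_nat q).
    assert (HqZ : IZR qZ = INR q) by (unfold qZ; rewrite <- INR_IZR_INZ; reflexivity).
    assert (HqZpos : (0 < qZ)%Z) by (unfold qZ; lia).
    set (y0 := phi / (2 * PI) - INR M * alpha).
    set (j := fl (INR q * y0)).
    pose proof (fl_spec (INR q * y0)) as Hj. fold j in Hj.
    set (i := Z.modulo (j * u) qZ).
    pose proof (Z.mod_pos_bound (j * u) qZ HqZpos) as Hi. fold i in Hi.
    set (Dz := Z.div (j * u) qZ).
    pose proof (Z.div_mod (j * u) qZ ltac:(lia)) as Hdm. fold i Dz in Hdm.
    set (t := (- (j * v) - Dz * p)%Z).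
    assert (Hip : (i * p = j + qZ * t)%Z).
    { assert (Hup : (u * p = 1 - v * qZ)%Z) by lia.
      replace i with (j * u - qZ * Dz)%Z by lia. unfold t.
      replace ((j * u - qZ * Dz) * p)%Z with (j * (u * p) - qZ * Dz * p)%Z by ring.
      rewrite Hup. ring. }
    set (n := (M + Z.to_nat i)%nat).
    assert (HnR : INR n = INR M + IZR i).
    { unfold n. rewrite plus_INR, (INR_IZR_INZ (Z.to_nat i)), Z2Nat.id by lia. reflexivity. }
    assert (HiR : 0 <= IZR i <= INR q - 1).
    { split; [apply IZR_le; lia|]. rewrite <- HqZ. rewrite <- (minus_IZR qZ 1). apply IZR_le. lia. }
    assert (HM0 : (1 <= M)%nat). { destruct M; [simpl in HM1; nra|lia]. }
    exists (zpt alpha n). split; [apply zpt_X; unfold n; lia|].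
    unfold in_ball. apply dist2_lt; [lra|]. rewrite Hr2.
    cbv [zpt fst snd]. rewrite Hx1, Hx2, polar_dist.
    set (D := INR n * alpha - IZR t - phi / (2 * PI)).
    pose proof PI_RGT_0 as Hpi.
    assert (Hcos : cos (phi - 2 * PI * INR n * alpha) = cos (2 * PI * D)).
    { rewrite <- cos_neg. replace (- (phi - 2 * PI * INR n * alpha)) with (2 * PI * D + 2 * IZR t * PI)
        by (unfold D; field; lra).
      apply cos_periodZ. }
    rewrite Hcos.
    assert (HD : Rabs D < K / INR Q).
    { assert (Halpha : alpha = (IZR p + e) / INR q) by (unfold e; field; lra).
      assert (HDe : D = (IZR j - INR q * y0) / INR q + IZR i * e / INR q).
      { unfold D. rewrite HnR.
        assert (IZR i * alpha = IZR j / INR q + IZR t + IZR i * e / INR q).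
        { rewrite Halpha. apply (f_equal IZR) in Hip. rewrite mult_IZR, plus_IZR, mult_IZR, HqZ in Hip.
          transitivity ((IZR i * IZR p + IZR i * e) / INR q); [field; lra|].
          rewrite Hip. field. lra. }
        rewrite Rmult_plus_distr_r, H. unfold y0. field. lra. }
      rewrite HDe.
      assert (Hq0 : 0 < INR q) by lra.
      assert (H1 : Rabs ((IZR j - INR q * y0) / INR q) <= 1 / INR q).
      { unfold Rdiv. rewrite Rabs_mult, (Rabs_right (/ INR q)) by (apply Rle_ge; left; apply Rinv_0_lt_compat; lra).
        apply Rmult_le_compat_r; [left; apply Rinv_0_lt_compat; lra|]. apply Rabs_le. lra. }
      assert (H2 : Rabs (IZR i * e / INR q) < 1 / INR Q).
      { unfold Rdiv. rewrite !Rabs_mult, (Rabs_right (/ INR q)) by (apply Rle_ge; left; apply Rinv_0_lt_compat; lra).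
        rewrite (Rabs_right (IZR i)) by lra.
        apply Rle_lt_trans with (Rabs e); [|exact He].
        apply Rmult_le_reg_r with (INR q); [lra|].
        replace (IZR i * Rabs e * / INR q * INR q) with (IZR i * Rabs e) by (field; lra).
        pose proof (Rabs_pos e). nra. }
      assert (H3 : 1 / INR q < 1 / (C * INR Q)).
      { apply Rinv_lt_contravar || (unfold Rdiv; rewrite !Rmult_1_l; apply Rinv_lt_contravar).
        - apply Rmult_lt_0_compat; nra.
        - exact HCq. }
      pose proof (Rabs_triang ((IZR j - INR q * y0) / INR q) (IZR i * e / INR q)).
      replace (K / INR Q) with (1 / (C * INR Q) + 1 / INR Q) by (unfold K; field; lra).
      lra. }
    apply (rd_final rho (sqrt (INR n)) (INR n) (INR Q) K D).
    + exact Hbig.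
    + rewrite HnR. lra.
    + rewrite HnR. assert (INR q <= INR Q) by (apply le_INR; lia). lra.
    + apply sqrt_pos.
    + apply sqrt_sqrt. apply pos_INR.
    + exact HQ1.
    + exact HD.
    + pose proof (COS_bound (2 * PI * D)). lra.
    + apply one_minus_cos_le.
Qed.

Theorem theorem2 (alpha : R) (Halpha : 0 <= alpha < 1) :
  (relatively_dense (Xsqrt alpha) <-> badly_approximable alpha) /\
  (uniformly_discrete (Xsqrt alpha) <-> badly_approximable alpha) /\
  (Delone (Xsqrt alpha) <-> badly_approximable alpha).
Proof.
  split; [split; [apply rd_ba|apply ba_rd]|].
  split; [split; [apply ud_ba|apply ba_ud]|].
  unfold Delone. split.
  - intros [H _]. now apply rd_ba.
  - intros H. split; [now apply ba_rd|now apply ba_ud].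
Qed.
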